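(* Let $p$ be a prime with $p\equiv 1$ or $7\pmod 8$, and let $\mathfrak{p}$ be a prime ideal of $\mathbb{Z}[\sqrt2]$ lying over $p$. Let $(a_p,b_p)$ be the solution of $a^2-2b^2=p$ in positive integers with $a_p$ minimal. Then $$\lambda_1\big(\Sigma_{\mathbb{Q}(\sqrt2)}(\mathfrak{p})\big)=\sqrt{2}\,\min\left(\sqrt{2a_p^2-p},\ \sqrt{6a_p^2-4\sqrt2\,a_p\sqrt{a_p^2-p}-3p}\right).$$
   Context: The canonical embedding of $\mathbb{Q}(\sqrt2)$ is $\Sigma_{\mathbb{Q}(\sqrt2)}(x)=(x,\tau(x))$, where $\tau(\sqrt2)=-\sqrt2$, with $\|\Sigma_{\mathbb{Q}(\sqrt2)}(x)\|^2=x^2+\tau(x)^2$. For a nonzero ideal $I$, $\lambda_1(\Sigma_{\mathbb{Q}(\sqrt2)}(I))=\min_{0\ne x\in I}\|\Sigma_{\mathbb{Q}(\sqrt2)}(x)\|$. *)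

(* Defs.v *)
From HB Require Import structures.
From mathcomp Require Import all_boot all_order all_algebra.
From mathcomp Require Import all_classical all_reals.
Set Implicit Arguments. Unset Strict Implicit. Unset Printing Implicit Defensive.
Import Order.TTheory GRing.Theory Num.Theory.
Local Open Scope ring_scope.
Local Open Scope classical_set_scope.

(* The ring Z[sqrt 2]: the pair (x, y) represents x + y * sqrt 2. *)
Definition zs2 := (int * int)%type.
Definition zs2_add (u v : zs2) : zs2 := (u.1 + v.1, u.2 + v.2).
Definition zs2_mul (u v : zs2) : zs2 :=
  (u.1 * v.1 + 2 * u.2 * v.2, u.1 * v.2 + u.2 * v.1).
Definition zs2_zero : zs2 := (0, 0).
Definition zs2_one : zs2 := (1, 0).

Definition is_ideal (I : zs2 -> Prop) : Prop :=
  [/\ I zs2_zero,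
      (forall u v, I u -> I v -> I (zs2_add u v)) &
      (forall r u, I u -> I (zs2_mul r u))].

Definition is_prime_ideal (I : zs2 -> Prop) : Prop :=
  [/\ is_ideal I, ~ I zs2_one &
      (forall u v, I (zs2_mul u v) -> I u \/ I v)].

Definition lies_over (I : zs2 -> Prop) (p : nat) : Prop :=
  forall n : int, I (n, 0) <-> (p%:Z %| n)%Z.

Definition sigma_emb (R : realType) (u : zs2) : R * R :=
  (u.1%:~R + u.2%:~R * Num.sqrt 2, u.1%:~R - u.2%:~R * Num.sqrt 2).

Definition sigma_norm (R : realType) (u : zs2) : R :=
  Num.sqrt ((sigma_emb R u).1 ^+ 2 + (sigma_emb R u).2 ^+ 2).

Definition lambda1 (R : realType) (I : zs2 -> Prop) : R :=
  inf [set r : R | exists u, [/\ I u, u <> zs2_zero & r = sigma_norm R u]].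

(* Main.v *)
Require Import Defs.
From HB Require Import structures.
From mathcomp Require Import all_boot all_order all_algebra.
From mathcomp Require Import all_classical all_reals.
From mathcomp Require Import zify ring.
Import Order.TTheory GRing.Theory Num.Theory.
Local Open Scope ring_scope.

Lemma core1 (a b u v c d : int) : 0 < b -> 2*b <= a -> u^+2 - 2 * v^+2 = -1 ->
  c = a*u - 2*b*v -> d = a*v - b*u -> 0 < c -> 0 < d -> a - 2*b <= c.
Proof.
move=> hb hab huv -> -> hc hd.
have huv2 : v^+2 <= u^+2 /\ v != 0 by split; nia.
have [hv _] := huv2.
have : `|v| <= `|u|. by rewrite -ler_sqr ?normr_ge0 // !real_normK ?num_real.
case: (lerP 0 u) => hu; case: (lerP 0 v) => hv0; nia.
Qed.

Lemma core2 (a b u v c d : int) : 0 < b -> 2*b <= a -> u^+2 - 2 * v^+2 = -1 ->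
  c = a*u + 2*b*v -> d = a*v + b*u -> 0 < c -> 0 < d -> a - 2*b <= c.
Proof.
move=> hb hab huv -> -> hc hd.
have huv2 : v^+2 <= u^+2 /\ v != 0 by split; nia.
have [hv _] := huv2.
have : `|v| <= `|u|. by rewrite -ler_sqr ?normr_ge0 // !real_normK ?num_real.
case: (lerP 0 u) => hu; case: (lerP 0 v) => hv0; nia.
Qed.

Lemma euclidz (p : nat) (X Y : int) : prime p -> (p%:Z %| X * Y)%Z ->
  (p%:Z %| X)%Z \/ (p%:Z %| Y)%Z.
Proof. by move=> pp; rewrite !dvdzE abszM Euclid_dvdM //; case/orP; auto. Qed.

Lemma not_sq (p : nat) (s : int) : prime p -> s^+2 <> p%:Z.
Proof.
move=> pp h.
have hn : (`|s| * `|s|)%N = p.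
  by have := congr1 absz h; rewrite abszX /= => <-; rewrite expnS expn1.
have p1 := prime_gt1 pp.
have : (`|s| %| p)%N by rewrite -hn dvdn_mulr.
case: (eqVneq `|s|%N 1) => [e1|ne1].
  by move: hn; rewrite e1 => hp1; lia.
by move/(prime_nt_dvdP pp ne1) => e; move: hn; rewrite e; nia.
Qed.

Lemma irr2 (c d : int) : c^+2 = 2 * d^+2 -> d = 0.
Proof.
move=> h; apply/eqP; apply/negPn/negP => hd.
have hn : (`|c| ^ 2 = 2 * `|d| ^ 2)%N.
  by have := congr1 absz h; rewrite abszM !abszX.
have d0 : (0 < `|d|)%N by rewrite absz_gt0.
have c0 : (0 < `|c|)%N.
  rewrite absz_gt0; apply/eqP=> c0; move: hn; rewrite c0 /=; lia.
have := congr1 (logn 2) hn.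
rewrite lognM ?expn_gt0 ?d0 // !lognX (logn_prime 2 (isT : prime 2)) /=.
lia.
Qed.

Lemma odd_p (p : nat) : (p %% 8 = 1 \/ p %% 8 = 7)%N -> ~~ (2 %| p)%N.
Proof. move=> h; apply/negP => /dvdnP [k hk]; lia. Qed.
Lemma a2b (p : nat) (a b : int) : prime p -> 0 < a -> 0 < b -> a ^+ 2 - 2 * b ^+ 2 = p%:Z ->
  (forall a' b' : int, 0 < a' -> 0 < b' -> a' ^+ 2 - 2 * b' ^+ 2 = p%:Z -> a <= a') ->
  2 * b <= a.
Proof.
move=> pp ha hb hp hmin.
have p1 := prime_gt1 pp.
have h1 : 0 < 3*a - 4*b by nia.
have h2 : 3*b - 2*a != 0.
  apply/eqP => e; apply: (@not_sq p (a - b) pp); rewrite -hp; nia.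
have := hmin (3*a - 4*b) `|3*b - 2*a| h1.
rewrite normr_gt0 h2 => /(_ isT).
rewrite real_normK ?num_real //.
have -> : (3 * a - 4 * b) ^+ 2 - 2 * (3 * b - 2 * a) ^+ 2 = a^+2 - 2 * b^+2 by ring.
move=> /(_ hp); lia.
Qed.
Lemma unit_lemma (p : nat) (X Y u : int) : prime p -> ~~ (2 %| p)%N ->
  X = u * p%:Z -> X^+2 - 2 * Y^+2 = - (p%:Z ^+ 2) ->
  exists v, Y = v * p%:Z /\ u^+2 - 2 * v^+2 = -1.
Proof.
move=> pp odd hX hN.
have p1 := prime_gt1 pp.
have h2 : (p%:Z %| 2 * (Y * Y))%Z.
  apply/dvdzP; exists (p%:Z * (u^+2 + 1)).
  have -> : 2 * (Y * Y) = X^+2 + p%:Z^+2 by move: hN; nia.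
  rewrite hX; ring.
have [h|h] := euclidz _ _ _ pp h2.
  by move: h; rewrite dvdzE /= => /dvdn_leq => /(_ isT) h; move: odd; have -> : p = 2%N by lia.
have /dvdzP [v hv] : (p%:Z %| Y)%Z by case: (euclidz _ _ _ pp h).
exists v; split => //.
have pz : p%:Z ^+ 2 != 0 by lia.
apply: (mulfI pz); rewrite mulrN1 -hN hX hv; ring.
Qed.
Lemma neg_case (p : nat) (a b c0 d0 : int) : prime p -> ~~ (2 %| p)%N ->
  0 < b -> 2 * b <= a -> a ^+ 2 - 2 * b ^+ 2 = p%:Z ->
  0 < c0 -> 0 < d0 -> c0^+2 - 2 * d0^+2 = - p%:Z -> a - 2 * b <= c0.
Proof.
move=> pp odd hb hab hp hc hd hcd.
have p1 := prime_gt1 pp.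
have pz : p%:Z != 0 by lia.
have hXX : (a*c0 + 2*b*d0) * (a*c0 - 2*b*d0) = p%:Z * (c0^+2 - a^+2 + p%:Z).
  rewrite -hp; move: hcd; rewrite -hp; nia.
have hd2 : (p%:Z %| (a*c0 + 2*b*d0) * (a*c0 - 2*b*d0))%Z.
  by apply/dvdzP; exists (c0^+2 - a^+2 + p%:Z); rewrite hXX mulrC.
case: (euclidz _ _ _ pp hd2) => /dvdzP [u hu].
- have [v [hv huv]] : exists v, a*d0 + b*c0 = v * p%:Z /\ u^+2 - 2 * v^+2 = -1.
    apply: (unit_lemma _ _ _ _ pp odd hu).
    have -> : - (p%:Z ^+2) = (a^+2 - 2*b^+2) * (c0^+2 - 2*d0^+2) by rewrite hp hcd; ring.
    ring.
  apply: (core1 a b u v c0 d0) => //.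
  + apply: (mulfI pz); rewrite -{1}hp.
    have -> : p%:Z * (a * u - 2 * b * v) = a * (u * p%:Z) - 2 * b * (v * p%:Z) by ring.
    rewrite -hu -hv; ring.
  + apply: (mulfI pz); rewrite -{1}hp.
    have -> : p%:Z * (a * v - b * u) = a * (v * p%:Z) - b * (u * p%:Z) by ring.
    rewrite -hu -hv; ring.
- have [v [hv huv]] : exists v, a*d0 - b*c0 = v * p%:Z /\ u^+2 - 2 * v^+2 = -1.
    apply: (unit_lemma _ _ _ _ pp odd hu).
    have -> : - (p%:Z ^+2) = (a^+2 - 2*b^+2) * (c0^+2 - 2*d0^+2) by rewrite hp hcd; ring.
    ring.
  apply: (core2 a b u v c0 d0) => //.
  + apply: (mulfI pz); rewrite -{1}hp.
    have -> : p%:Z * (a * u + 2 * b * v) = a * (u * p%:Z) + 2 * b * (v * p%:Z) by ring.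
    rewrite -hu -hv; ring.
  + apply: (mulfI pz); rewrite -{1}hp.
    have -> : p%:Z * (a * v + b * u) = a * (v * p%:Z) + b * (u * p%:Z) by ring.
    rewrite -hu -hv; ring.
Qed.
Lemma lower (p : nat) (P : zs2 -> Prop) (a b c d : int) :
  prime p -> (p %% 8 = 1 \/ p %% 8 = 7)%N -> is_prime_ideal P -> lies_over P p ->
  0 < a -> 0 < b -> a ^+ 2 - 2 * b ^+ 2 = p%:Z ->
  (forall a' b' : int, 0 < a' -> 0 < b' -> a' ^+ 2 - 2 * b' ^+ 2 = p%:Z -> a <= a') ->
  P (c, d) -> (c, d) <> zs2_zero ->
  4 * a^+2 - 2 * p%:Z <= 2 * c^+2 + 4 * d^+2 \/
  12 * a^+2 - 16 * a * b - 6 * p%:Z <= 2 * c^+2 + 4 * d^+2.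
Proof.
move=> pp p8 [[P0 Padd Pmul] P1 Pprime] lo ha hb hp hmin Pcd nz.
have hab := a2b _ _ _ pp ha hb hp hmin.
have p1 := prime_gt1 pp.
have odd := odd_p _ p8.
have PN : P (c^+2 - 2 * d^+2, 0).
  have -> : (c^+2 - 2 * d^+2, 0) = zs2_mul (c, -d) (c, d)
    by rewrite /zs2_mul /=; congr pair; ring.
  exact: Pmul.
have /dvdzP [q hq] := (lo _).1 PN.
have cd0 : c != 0 \/ d != 0.
  case: (eqVneq c 0) => [c0|]; last by left.
  case: (eqVneq d 0) => [d0|]; last by right.
  by exfalso; apply: nz; rewrite c0 d0.
have q0 : q != 0.
  apply/eqP => q0; move: hq; rewrite q0 mul0r => /eqP; rewrite subr_eq0 => /eqP h.
  have d0 := irr2 _ _ h; move: h; rewrite d0 => h.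
  case: cd0 => /eqP; [|by []]; move: h; nia.
have [q1|[q1|q2]] : q = 1 \/ q = -1 \/ (q <= -2 \/ 2 <= q) by lia.
- move: hq; rewrite q1 mul1r => hq.
  have c0 : c != 0 by apply/eqP => c0; move: hq; rewrite c0; nia.
  have d0 : d != 0 by apply/eqP => d0; apply: (@not_sq p c pp); rewrite -hq d0; ring.
  have := hmin `|c| `|d|; rewrite !normr_gt0 c0 d0 !real_normK ?num_real // => /(_ isT isT hq) h.
  have : a ^+ 2 <= c ^+ 2.
    have : a ^+ 2 <= `|c| ^+ 2 by nia.
    by rewrite real_normK ?num_real.
  left; nia.
- move: hq; rewrite q1 mulN1r => hq.
  have c0 : c != 0.
    apply/eqP => c0; have : (2%:Z %| p%:Z)%Z by apply/dvdzP; exists (d^+2); move: hq; rewrite c0; nia.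
    by rewrite dvdzE /= (negbTE odd).
  have d0 : d != 0 by apply/eqP => d0; move: hq; rewrite d0; nia.
  have := neg_case _ _ _ `|c| `|d| pp odd hb hab hp.
  rewrite !normr_gt0 c0 d0 !real_normK ?num_real // => /(_ isT isT hq) h.
  have : (a - 2 * b) ^+ 2 <= c ^+ 2.
    have : (a - 2 * b) ^+ 2 <= `|c| ^+ 2 by nia.
    by rewrite real_normK ?num_real.
  right; nia.
- have hm : 4 * a^+2 - 2 * p%:Z <= 4 * p%:Z \/ 12 * a^+2 - 16 * a * b - 6 * p%:Z <= 4 * p%:Z.
    case: (lerP (4 * a^+2 - 2 * p%:Z) (4 * p%:Z)) => h; [by left|right].
    have h6 : a^+2 < 6 * b^+2 by nia.
    have h6' : a <= 6 * b by nia.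
    nia.
  have hQ : 4 * p%:Z <= 2 * c^+2 + 4 * d^+2 by case: q2 => q2; nia.
  case: hm => hm; [left|right]; lia.
Qed.
Lemma sigma_normE (R : realType) (u : zs2) :
  sigma_norm R u = Num.sqrt (2 * u.1%:~R ^+ 2 + 4 * u.2%:~R ^+ 2).
Proof.
rewrite /sigma_norm /sigma_emb /=; congr Num.sqrt.
have hs2 : Num.sqrt (2 : R) ^+ 2 = 2 by rewrite sqr_sqrtr // ler0n.
transitivity (2 * u.1%:~R ^+ 2 + 2 * u.2%:~R ^+ 2 * Num.sqrt (2 : R) ^+ 2 : R); first ring.
rewrite hs2; ring.
Qed.

Lemma castp (R : realType) (p : nat) (a b : int) : a ^+ 2 - 2 * b ^+ 2 = p%:Z ->
  (p%:R : R) = a%:~R ^+ 2 - 2 * b%:~R ^+ 2.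
Proof.
move=> hp; rewrite pmulrn -hp.
by rewrite rmorphB /= !rmorphM /= !expr2.
Qed.
Theorem theorem7 (R : realType) (p : nat) (P : zs2 -> Prop) (a b : int) :
  prime p ->
  (p %% 8 = 1 \/ p %% 8 = 7)%N ->
  is_prime_ideal P ->
  lies_over P p ->
  0 < a -> 0 < b -> a ^+ 2 - 2 * b ^+ 2 = p%:Z ->
  (forall a' b' : int, 0 < a' -> 0 < b' -> a' ^+ 2 - 2 * b' ^+ 2 = p%:Z -> a <= a') ->
  lambda1 R P =
    Num.sqrt 2 *
    Num.min (Num.sqrt (2 * a%:~R ^+ 2 - p%:R))
            (Num.sqrt (6 * a%:~R ^+ 2
                       - 4 * Num.sqrt 2 * a%:~R * Num.sqrt (a%:~R ^+ 2 - p%:R)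
                       - 3 * p%:R)).
Proof.
move=> pp p8 hP lo ha hb hp hmin.
have [[P0 Padd Pmul] P1 Pprime] := hP.
have hab := a2b _ _ _ pp ha hb hp hmin.
have s0 : 0 <= Num.sqrt (2:R) := sqrtr_ge0 _.
have hs2 : Num.sqrt (2:R) ^+ 2 = 2 by rewrite sqr_sqrtr // ler0n.
have hpR := castp R _ _ _ hp.
have hsq : Num.sqrt (a%:~R ^+ 2 - p%:R : R) = Num.sqrt 2 * b%:~R.
  rewrite hpR (_ : _ - _ = 2 * b%:~R ^+ 2); last ring.
  by rewrite sqrtrM ?ler0n // sqrtr_sqr ger0_norm // ler0z ltW.
rewrite hsq.
set α := 2 * a%:~R ^+ 2 - p%:R.
set β := 6 * a%:~R ^+ 2 - 4 * Num.sqrt 2 * a%:~R * (Num.sqrt 2 * b%:~R) - 3 * p%:R.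
have hα : ((4 * a^+2 - 2 * p%:Z)%:~R : R) = 2 * α.
  by rewrite /α hpR -hp; ring.
have hβ : ((12 * a^+2 - 16 * a * b - 6 * p%:Z)%:~R : R) = 2 * β.
  rewrite /β hpR -hp.
  rewrite (_ : 4 * Num.sqrt 2 * a%:~R * (Num.sqrt 2 * b%:~R) = 8 * a%:~R * b%:~R :> R); first ring.
  transitivity (4 * Num.sqrt (2:R) ^+ 2 * a%:~R * b%:~R); first ring.
  by rewrite hs2; ring.
set T := (X in _ = X).
pose S := [set r : R | exists u, [/\ P u, u <> zs2_zero & r = sigma_norm R u]]%classic.
have lb : lbound S T.
  move=> r [[c d] [Pu nz ->]].
  rewrite sigma_normE /=.
  have hQ : ((2 * c^+2 + 4 * d^+2)%:~R : R) = 2 * c%:~R ^+ 2 + 4 * d%:~R ^+ 2 by ring.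
  rewrite -hQ.
  have [h|h] := lower _ _ _ _ _ _ pp p8 hP lo ha hb hp hmin Pu nz.
  + apply: (@le_trans _ _ (Num.sqrt 2 * Num.sqrt α)).
      by rewrite ler_wpM2l // ge_min lexx.
    by rewrite -sqrtrM ?ler0n // -hα ler_wsqrtr // ler_int.
  + apply: (@le_trans _ _ (Num.sqrt 2 * Num.sqrt β)).
      by rewrite ler_wpM2l // ge_min lexx orbT.
    by rewrite -sqrtrM ?ler0n // -hβ ler_wsqrtr // ler_int.
have inS : S T.
  have Pp : P (p%:Z, 0) by apply/(lo _).2; exact: dvdzz.
  have e : zs2_mul (a, -b) (a, b) = (p%:Z, 0).
    by rewrite /zs2_mul /=; congr pair; [rewrite -hp|]; ring.
  have [h|h] : P (a, -b) \/ P (a, b) by apply: Pprime; rewrite e.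
  - have [hle|hlt] := leP α β.
    + exists (a, -b); split => //; first by case; lia.
      rewrite /T min_l ?ler_wsqrtr // -sqrtrM ?ler0n // sigma_normE /=; congr Num.sqrt.
      by rewrite /α hpR; ring.
    + exists (zs2_mul (-1, -1) (a, -b)); split; first exact: Pmul.
        by rewrite /zs2_mul /=; case; lia.
      rewrite /T min_r; last by rewrite ler_wsqrtr // ltW.
      rewrite -sqrtrM ?ler0n // sigma_normE /=; congr Num.sqrt.
      rewrite -hβ -hp; ring.
  - have [hle|hlt] := leP α β.
    + exists (a, b); split => //; first by case; lia.
      rewrite /T min_l ?ler_wsqrtr // -sqrtrM ?ler0n // sigma_normE /=; congr Num.sqrt.
      by rewrite /α hpR; ring.
    + exists (zs2_mul (-1, 1) (a, b)); split; first exact: Pmul.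
        by rewrite /zs2_mul /=; case; lia.
      rewrite /T min_r; last by rewrite ler_wsqrtr // ltW.
      rewrite -sqrtrM ?ler0n // sigma_normE /=; congr Num.sqrt.
      rewrite -hβ -hp; ring.
apply/le_anti/andP; split.
  by apply: ge_inf => //; exists T.
by apply: lb_le_inf => //; exists T.
Qed.
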